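(* Let $A_1,B_1,B_2,C_1,C_2,C_3\in\mathbb{C}^{r\times r}$ with $C_j+mI$ invertible for all $m\ge0$, $A_1B_i=B_iA_1$ ($i=1,2$), $B_1B_2=B_2B_1$, and $C_iC_j=C_jC_i$ for $i,j\in\{1,2,3\}$. Let $n\ge1$ and suppose $A_1+mI$ is invertible for all $m\ge0$. Then $$F_4[A_1+nI]=F_4+x_1B_1\Big[\sum_{n_1=1}^nF_4[A_1+n_1I,B_1+I,C_1+I]\Big]C_1^{-1}+x_2B_2\Big[\sum_{n_1=1}^nF_4[A_1+n_1I,B_2+I,C_2+I]\Big]C_2^{-1}+x_3B_2\Big[\sum_{n_1=1}^nF_4[A_1+n_1I,B_2+I,C_3+I]\Big]C_3^{-1}.$$ Furthermore, if $A_1-n_1I$ is invertible for $0\le n_1\le n$, then $$F_4[A_1-nI]=F_4-x_1B_1\Big[\sum_{n_1=0}^{n-1}F_4[A_1-n_1I,B_1+I,C_1+I]\Big]C_1^{-1}-x_2B_2\Big[\sum_{n_1=0}^{n-1}F_4[A_1-n_1I,B_2+I,C_2+I]\Big]C_2^{-1}-x_3B_2\Big[\sum_{n_1=0}^{n-1}F_4[A_1-n_1I,B_2+I,C_3+I]\Big]C_3^{-1}.$$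
   Context: For $M\in\mathbb{C}^{r\times r}$: $(M)_0=I$, $(M)_m=M(M+I)\cdots(M+(m-1)I)$, $(M)^{-1}_m=((M)_m)^{-1}$. The three-variable Lauricella matrix function $$F_4=F_4[A_1,B_1,B_2;C_1,C_2,C_3;x_1,x_2,x_3]=\sum_{m_1,m_2,m_3\ge0}(A_1)_{m_1+m_2+m_3}(B_1)_{m_1}(B_2)_{m_2+m_3}(C_1)^{-1}_{m_1}(C_2)^{-1}_{m_2}(C_3)^{-1}_{m_3}\frac{x_1^{m_1}x_2^{m_2}x_3^{m_3}}{m_1!m_2!m_3!},$$ with scalar variables $x_1,x_2,x_3$ and matrix products in the written order; identities are of formal power series in the $x_i$. $F_4[\dots]$ lists only the shifted parameters, all others unchanged. *)

(* Defs.v *)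
From HB Require Import structures.
From mathcomp Require Import all_boot all_order all_algebra.
From mathcomp Require Import reals.
From mathcomp.real_closed Require Import complex.
Set Implicit Arguments. Unset Strict Implicit. Unset Printing Implicit Defensive.
Import GRing.Theory Num.Theory.
Local Open Scope ring_scope.

Fixpoint mxpoch {F : fieldType} {r : nat} (M : 'M[F]_r) (m : nat) : 'M[F]_r :=
  match m with
  | 0 => 1%:M
  | k.+1 => mxpoch M k *m (M + k%:R%:M)
  end.

(* Formal power series in x1 x2 x3 with r x r matrix coefficients,
   represented by their coefficient function (m1, m2, m3) |-> coefficient. *)
Definition fps3 (F : fieldType) (r : nat) := nat -> nat -> nat -> 'M[F]_r.

Definition F4 {F : fieldType} {r : nat} (A1 B1 B2 C1 C2 C3 : 'M[F]_r) : fps3 F r :=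
  fun m1 m2 m3 =>
    ((m1`! * m2`! * m3`!)%:R)^-1 *:
    (mxpoch A1 (m1 + m2 + m3) *m mxpoch B1 m1 *m mxpoch B2 (m2 + m3)
      *m invmx (mxpoch C1 m1) *m invmx (mxpoch C2 m2) *m invmx (mxpoch C3 m3)).

(* Multiplication of a series by the variable x1, x2, x3 respectively. *)
Definition xmul1 {F : fieldType} {r : nat} (f : fps3 F r) : fps3 F r :=
  fun m1 m2 m3 => if m1 is k.+1 then f k m2 m3 else 0.
Definition xmul2 {F : fieldType} {r : nat} (f : fps3 F r) : fps3 F r :=
  fun m1 m2 m3 => if m2 is k.+1 then f m1 k m3 else 0.
Definition xmul3 {F : fieldType} {r : nat} (f : fps3 F r) : fps3 F r :=
  fun m1 m2 m3 => if m3 is k.+1 then f m1 m2 k else 0.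

Definition lrmul {F : fieldType} {r : nat} (L : 'M[F]_r) (f : fps3 F r) (R : 'M[F]_r)
  : fps3 F r := fun m1 m2 m3 => L *m f m1 m2 m3 *m R.

(* Main.v *)
From HB Require Import structures.
From mathcomp Require Import all_boot all_order all_algebra.
From mathcomp Require Import reals.
From mathcomp.real_closed Require Import complex.
From mathcomp Require Import ring.
Require Import Defs.
Set Implicit Arguments. Unset Strict Implicit. Unset Printing Implicit Defensive.
Import GRing.Theory Num.Theory.
Local Open Scope ring_scope.

Section S.
Variable F : fieldType.
Variable r : nat.
Implicit Types M X Y A B C : 'M[F]_r.

Lemma smxD (a b : F) : (a + b)%:M = a%:M + b%:M :> 'M[F]_r.
Proof. exact: raddfD. Qed.

Lemma addS_mx M (k : nat) : M + 1%:M + k%:R%:M = M + k.+1%:R%:M.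
Proof. by rewrite -addrA -smxD [1 + _]addrC natr1. Qed.

Lemma pochC X M k : X *m M = M *m X -> X *m mxpoch M k = mxpoch M k *m X.
Proof.
move=> h; elim: k => [|k IH] /=; first by rewrite mulmx1 mul1mx.
rewrite mulmxA IH -!mulmxA; congr (_ *m _).
by rewrite mulmxDr mulmxDl h scalar_mxC.
Qed.

Lemma poch_shift M k : mxpoch M k.+1 = M *m mxpoch (M + 1%:M) k.
Proof.
elim: k => [|k IH]; first by rewrite /= mul1mx mulmx1 raddf0 addr0.
change (mxpoch M k.+2) with (mxpoch M k.+1 *m (M + k.+1%:R%:M)).
change (mxpoch (M + 1%:M) k.+1) with (mxpoch (M + 1%:M) k *m (M + 1%:M + k%:R%:M)).
by rewrite IH -!mulmxA addS_mx.
Qed.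

Lemma poch_diff M k :
  mxpoch (M + 1%:M) k.+1 - mxpoch M k.+1 = k.+1%:R *: mxpoch (M + 1%:M) k.
Proof.
have hc : M *m (M + 1%:M) = (M + 1%:M) *m M by rewrite mulmxDr mulmxDl mulmx1 mul1mx.
rewrite (poch_shift M k) (pochC k hc).
change (mxpoch (M + 1%:M) k.+1) with (mxpoch (M + 1%:M) k *m (M + 1%:M + k%:R%:M)).
rewrite -mulmxBr. have -> : M + 1%:M + k%:R%:M - M = k.+1%:R%:M.
  by rewrite addrAC [M + _]addrC addrK -smxD [1 + _]addrC natr1.
by rewrite mul_mx_scalar.
Qed.

Lemma poch_unit C k : (forall m : nat, C + m%:R%:M \in unitmx) -> mxpoch C k \in unitmx.
Proof.
move=> h; elim: k => [|k IH] /=; first exact: unitmx1.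
by rewrite unitmx_mul IH h.
Qed.

Lemma unit_shift C : (forall m : nat, C + m%:R%:M \in unitmx) ->
  forall m : nat, C + 1%:M + m%:R%:M \in unitmx.
Proof. by move=> h m; rewrite addS_mx. Qed.

Lemma invmxM X Y : X \in unitmx -> Y \in unitmx ->
  invmx (X *m Y) = invmx Y *m invmx X.
Proof.
move=> uX uY; have uXY : X *m Y \in unitmx by rewrite unitmx_mul uX uY.
rewrite -[RHS](mulKmx uXY) -!mulmxA (mulmxA Y) mulmxV // mul1mx mulmxV //.
by rewrite mulmx1.
Qed.

Lemma inv_comm X Y : X \in unitmx -> Y \in unitmx -> X *m Y = Y *m X ->
  invmx X *m invmx Y = invmx Y *m invmx X.
Proof. by move=> uX uY h; rewrite -invmxM // -invmxM // h. Qed.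

Lemma inv_poch C k : (forall m : nat, C + m%:R%:M \in unitmx) ->
  invmx (mxpoch (C + 1%:M) k) *m invmx C = invmx (mxpoch C k.+1).
Proof.
move=> h; rewrite poch_shift invmxM //; last exact/poch_unit/unit_shift.
by have := h 0%N; rewrite mulr0n raddf0 addr0.
Qed.

End S.

Section S2.
Variable F : numFieldType.
Variable r : nat.
Variables A B1 B2 C1 C2 C3 : 'M[F]_r.
Hypothesis hC1 : forall m : nat, C1 + m%:R%:M \in unitmx.
Hypothesis hC2 : forall m : nat, C2 + m%:R%:M \in unitmx.
Hypothesis hC3 : forall m : nat, C3 + m%:R%:M \in unitmx.
Hypothesis hAB1 : A *m B1 = B1 *m A.
Hypothesis hAB2 : A *m B2 = B2 *m A.
Hypothesis hB12 : B1 *m B2 = B2 *m B1.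
Hypothesis hC12 : C1 *m C2 = C2 *m C1.
Hypothesis hC13 : C1 *m C3 = C3 *m C1.
Hypothesis hC23 : C2 *m C3 = C3 *m C2.

Definition Pm m1 m2 m3 :=
  mxpoch (A + 1%:M) (m1 + m2 + m3).-1 *m mxpoch B1 m1 *m mxpoch B2 (m2 + m3)
  *m invmx (mxpoch C1 m1) *m invmx (mxpoch C2 m2) *m invmx (mxpoch C3 m3).

Definition fct m1 m2 m3 : F := (m1`! * m2`! * m3`!)%:R.

Lemma fact_neq0 n : (n`!)%:R != 0 :> F.
Proof. by rewrite pnatr_eq0 -lt0n fact_gt0. Qed.

Lemma BA1 (B : 'M[F]_r) k : A *m B = B *m A ->
  B *m mxpoch (A + 1%:M) k = mxpoch (A + 1%:M) k *m B.
Proof.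
move=> h; apply: pochC; by rewrite mulmxDr mulmxDl h mulmx1 mul1mx.
Qed.

Lemma unit1 : C1 \in unitmx.
Proof. by have := hC1 0%N; rewrite mulr0n raddf0 addr0. Qed.
Lemma unit2 : C2 \in unitmx.
Proof. by have := hC2 0%N; rewrite mulr0n raddf0 addr0. Qed.
Lemma unit3 : C3 \in unitmx.
Proof. by have := hC3 0%N; rewrite mulr0n raddf0 addr0. Qed.

Lemma T1 m1 m2 m3 :
  xmul1 (lrmul B1 (F4 (A + 1%:M) (B1 + 1%:M) B2 (C1 + 1%:M) C2 C3) (invmx C1)) m1 m2 m3
  = (m1%:R / fct m1 m2 m3) *: Pm m1 m2 m3.
Proof.
case: m1 => [|k]; first by rewrite mul0r scale0r.
rewrite /= /lrmul /F4 /Pm /fct -scalemxAr -!scalemxAl addSn addSn succnK.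
congr (_ *: _).
  rewrite factS !natrM; field.
  by rewrite !fact_neq0 [1 + _]addrC natr1 pnatr_eq0.
rewrite (poch_shift B1 k) -(inv_poch k hC1) !mulmxA (BA1 _ hAB1) -!mulmxA.
have e3 : invmx (mxpoch C3 m3) *m invmx C1 = invmx C1 *m invmx (mxpoch C3 m3).
  apply: inv_comm; [exact: poch_unit | exact: unit1 | by rewrite (pochC _ hC13)].
have e2 : invmx (mxpoch C2 m2) *m invmx C1 = invmx C1 *m invmx (mxpoch C2 m2).
  apply: inv_comm; [exact: poch_unit | exact: unit1 | by rewrite (pochC _ hC12)].
by rewrite e3 (mulmxA (invmx (mxpoch C2 m2))) e2 -mulmxA.
Qed.

Lemma T2 m1 m2 m3 :
  xmul2 (lrmul B2 (F4 (A + 1%:M) B1 (B2 + 1%:M) C1 (C2 + 1%:M) C3) (invmx C2)) m1 m2 m3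
  = (m2%:R / fct m1 m2 m3) *: Pm m1 m2 m3.
Proof.
case: m2 => [|k]; first by rewrite mul0r scale0r.
rewrite /= /lrmul /F4 /Pm /fct -scalemxAr -!scalemxAl !addnS !addSn succnK.
congr (_ *: _).
  rewrite factS !natrM; field.
  by rewrite !fact_neq0 [1 + _]addrC natr1 pnatr_eq0.
rewrite (poch_shift B2 (k + m3)) -(inv_poch k hC2) !mulmxA (BA1 _ hAB2).
rewrite -(mulmxA _ B2 (mxpoch B1 m1)) (pochC m1 (esym hB12)) !mulmxA -!mulmxA.
have e3 : invmx (mxpoch C3 m3) *m invmx C2 = invmx C2 *m invmx (mxpoch C3 m3).
  apply: inv_comm; [exact: poch_unit | exact: unit2 | by rewrite (pochC _ hC23)].
by rewrite e3.
Qed.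

Lemma T3 m1 m2 m3 :
  xmul3 (lrmul B2 (F4 (A + 1%:M) B1 (B2 + 1%:M) C1 C2 (C3 + 1%:M)) (invmx C3)) m1 m2 m3
  = (m3%:R / fct m1 m2 m3) *: Pm m1 m2 m3.
Proof.
case: m3 => [|k]; first by rewrite mul0r scale0r.
rewrite /= /lrmul /F4 /Pm /fct -scalemxAr -!scalemxAl !addnS succnK.
congr (_ *: _).
  rewrite factS !natrM; field.
  by rewrite !fact_neq0 [1 + _]addrC natr1 pnatr_eq0.
rewrite (poch_shift B2 (m2 + k)) -(inv_poch k hC3) !mulmxA (BA1 _ hAB2).
by rewrite -(mulmxA _ B2 (mxpoch B1 m1)) (pochC m1 (esym hB12)) !mulmxA.
Qed.

Lemma Dlem m1 m2 m3 :
  F4 (A + 1%:M) B1 B2 C1 C2 C3 m1 m2 m3 - F4 A B1 B2 C1 C2 C3 m1 m2 m3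
  = ((m1 + m2 + m3)%:R / fct m1 m2 m3) *: Pm m1 m2 m3.
Proof.
rewrite /F4 /Pm /fct -scalerBr -!mulmxA -mulmxBl.
case: (m1 + m2 + m3)%N => [|N].
  by rewrite /= subrr mul0mx scaler0 mulr0n mul0r scale0r.
rewrite (poch_diff A N) succnK -scalemxAl scalerA mulrC.
by [].
Qed.

Lemma step m1 m2 m3 :
  F4 (A + 1%:M) B1 B2 C1 C2 C3 m1 m2 m3 =
  F4 A B1 B2 C1 C2 C3 m1 m2 m3
  + xmul1 (lrmul B1 (F4 (A + 1%:M) (B1 + 1%:M) B2 (C1 + 1%:M) C2 C3) (invmx C1)) m1 m2 m3
  + xmul2 (lrmul B2 (F4 (A + 1%:M) B1 (B2 + 1%:M) C1 (C2 + 1%:M) C3) (invmx C2)) m1 m2 m3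
  + xmul3 (lrmul B2 (F4 (A + 1%:M) B1 (B2 + 1%:M) C1 C2 (C3 + 1%:M)) (invmx C3)) m1 m2 m3.
Proof.
rewrite T1 T2 T3 -!addrA -!scalerDl -!mulrDl -!natrD addnA -Dlem.
by rewrite addrC subrK.
Qed.

Lemma stepE m1 m2 m3 :
  F4 (A + 1%:M) B1 B2 C1 C2 C3 m1 m2 m3 =
  F4 A B1 B2 C1 C2 C3 m1 m2 m3
  + xmul1 (lrmul B1 (fun k1 k2 k3 => F4 (A + 1%:M) (B1 + 1%:M) B2 (C1 + 1%:M) C2 C3 k1 k2 k3) (invmx C1)) m1 m2 m3
  + xmul2 (lrmul B2 (fun k1 k2 k3 => F4 (A + 1%:M) B1 (B2 + 1%:M) C1 (C2 + 1%:M) C3 k1 k2 k3) (invmx C2)) m1 m2 m3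
  + xmul3 (lrmul B2 (fun k1 k2 k3 => F4 (A + 1%:M) B1 (B2 + 1%:M) C1 C2 (C3 + 1%:M) k1 k2 k3) (invmx C3)) m1 m2 m3.
Proof. exact: step. Qed.

End S2.

Lemma rearr1 (V : zmodType) (a s1 s2 s3 x1 x2 x3 : V) :
  a + s1 + s2 + s3 + x1 + x2 + x3 = a + (s1 + x1) + (s2 + x2) + (s3 + x3).
Proof.
rewrite -!addrA; congr (_ + (_ + _)).
rewrite [in RHS](addrCA x1); congr (_ + _).
by rewrite [in RHS](addrCA x2 s3) [in RHS](addrCA x1 s3).
Qed.

Lemma rearr1' (V : zmodType) (a s1 s2 s3 x1 x2 x3 : V) :
  a + x1 + x2 + x3 + s1 + s2 + s3 = a + (s1 + x1) + (s2 + x2) + (s3 + x3).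
Proof. by rewrite rearr1 (addrC x1) (addrC x2) (addrC x3). Qed.

Lemma solve3 (V : zmodType) (y z x1 x2 x3 : V) :
  y = z + x1 + x2 + x3 -> z = y - x1 - x2 - x3.
Proof.
move->; have -> : forall w : V, w - x1 - x2 - x3 = w - (x1 + x2 + x3).
  by move=> w; rewrite !opprD !addrA.
by rewrite -(addrA z x1 x2) -(addrA z (x1 + x2)) addrK.
Qed.

Lemma xmul1_sum (F : fieldType) r (L R : 'M[F]_r) (a b : nat) (f : nat -> fps3 F r) m1 m2 m3 :
  xmul1 (lrmul L (fun k1 k2 k3 => \sum_(a <= i < b) f i k1 k2 k3) R) m1 m2 m3
  = \sum_(a <= i < b) xmul1 (lrmul L (f i) R) m1 m2 m3.
Proof.
case: m1 => [|k] /=; first by rewrite big1.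
by rewrite /lrmul mulmx_sumr mulmx_suml.
Qed.
Lemma xmul2_sum (F : fieldType) r (L R : 'M[F]_r) (a b : nat) (f : nat -> fps3 F r) m1 m2 m3 :
  xmul2 (lrmul L (fun k1 k2 k3 => \sum_(a <= i < b) f i k1 k2 k3) R) m1 m2 m3
  = \sum_(a <= i < b) xmul2 (lrmul L (f i) R) m1 m2 m3.
Proof.
case: m2 => [|k] /=; first by rewrite big1.
by rewrite /lrmul mulmx_sumr mulmx_suml.
Qed.
Lemma xmul3_sum (F : fieldType) r (L R : 'M[F]_r) (a b : nat) (f : nat -> fps3 F r) m1 m2 m3 :
  xmul3 (lrmul L (fun k1 k2 k3 => \sum_(a <= i < b) f i k1 k2 k3) R) m1 m2 m3
  = \sum_(a <= i < b) xmul3 (lrmul L (f i) R) m1 m2 m3.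
Proof.
case: m3 => [|k] /=; first by rewrite big1.
by rewrite /lrmul mulmx_sumr mulmx_suml.
Qed.

Lemma subS_mx (F : fieldType) r (M : 'M[F]_r) (k : nat) :
  M - k.+1%:R%:M + 1%:M = M - k%:R%:M.
Proof. by rewrite -natr1 smxD opprD !addrA subrK. Qed.

Lemma addS_mx' (F : fieldType) r (M : 'M[F]_r) (k : nat) :
  M + k%:R%:M + 1%:M = M + k.+1%:R%:M.
Proof. by rewrite -addrA -smxD natr1. Qed.

Lemma commD (F : fieldType) r (A B : 'M[F]_r) (c : F) :
  A *m B = B *m A -> (A + c%:M) *m B = B *m (A + c%:M).
Proof. by move=> h; rewrite mulmxDl mulmxDr h scalar_mxC. Qed.

Lemma commB (F : fieldType) r (A B : 'M[F]_r) (c : F) :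
  A *m B = B *m A -> (A - c%:M) *m B = B *m (A - c%:M).
Proof. by move=> h; rewrite mulmxBl mulmxBr h scalar_mxC. Qed.

Theorem mainTheorem16 (R : realType) (r : nat)
  (A1 B1 B2 C1 C2 C3 : 'M[R[i]]_r)
  (hC1 : forall m : nat, C1 + m%:R%:M \in unitmx)
  (hC2 : forall m : nat, C2 + m%:R%:M \in unitmx)
  (hC3 : forall m : nat, C3 + m%:R%:M \in unitmx)
  (hAB1 : A1 *m B1 = B1 *m A1) (hAB2 : A1 *m B2 = B2 *m A1)
  (hB12 : B1 *m B2 = B2 *m B1)
  (hC12 : C1 *m C2 = C2 *m C1) (hC13 : C1 *m C3 = C3 *m C1)
  (hC23 : C2 *m C3 = C3 *m C2)
  (n : nat) (hn : (1 <= n)%N)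
  (hA : forall m : nat, A1 + m%:R%:M \in unitmx) :
  (forall m1 m2 m3 : nat,
     F4 (A1 + n%:R%:M) B1 B2 C1 C2 C3 m1 m2 m3 =
       F4 A1 B1 B2 C1 C2 C3 m1 m2 m3
     + xmul1 (lrmul B1 (fun k1 k2 k3 => \sum_(1 <= n1 < n.+1)
           F4 (A1 + n1%:R%:M) (B1 + 1%:M) B2 (C1 + 1%:M) C2 C3 k1 k2 k3)
           (invmx C1)) m1 m2 m3
     + xmul2 (lrmul B2 (fun k1 k2 k3 => \sum_(1 <= n1 < n.+1)
           F4 (A1 + n1%:R%:M) B1 (B2 + 1%:M) C1 (C2 + 1%:M) C3 k1 k2 k3)
           (invmx C2)) m1 m2 m3
     + xmul3 (lrmul B2 (fun k1 k2 k3 => \sum_(1 <= n1 < n.+1)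
           F4 (A1 + n1%:R%:M) B1 (B2 + 1%:M) C1 C2 (C3 + 1%:M) k1 k2 k3)
           (invmx C3)) m1 m2 m3)
  /\
  ((forall n1 : nat, (n1 <= n)%N -> A1 - n1%:R%:M \in unitmx) ->
   forall m1 m2 m3 : nat,
     F4 (A1 - n%:R%:M) B1 B2 C1 C2 C3 m1 m2 m3 =
       F4 A1 B1 B2 C1 C2 C3 m1 m2 m3
     - xmul1 (lrmul B1 (fun k1 k2 k3 => \sum_(0 <= n1 < n)
           F4 (A1 - n1%:R%:M) (B1 + 1%:M) B2 (C1 + 1%:M) C2 C3 k1 k2 k3)
           (invmx C1)) m1 m2 m3
     - xmul2 (lrmul B2 (fun k1 k2 k3 => \sum_(0 <= n1 < n)
           F4 (A1 - n1%:R%:M) B1 (B2 + 1%:M) C1 (C2 + 1%:M) C3 k1 k2 k3)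
           (invmx C2)) m1 m2 m3
     - xmul3 (lrmul B2 (fun k1 k2 k3 => \sum_(0 <= n1 < n)
           F4 (A1 - n1%:R%:M) B1 (B2 + 1%:M) C1 C2 (C3 + 1%:M) k1 k2 k3)
           (invmx C3)) m1 m2 m3).
Proof.
have st := stepE hC1 hC2 hC3 _ _ hB12 hC12 hC13 hC23.
split.
  move=> m1 m2 m3; rewrite xmul1_sum xmul2_sum xmul3_sum.
  elim: n {hn} => [|n IH].
    by rewrite !big_geq // mulr0n raddf0 !addr0.
  rewrite !(big_nat_recr n.+1) //=.
  have := st (A1 + n%:R%:M) (commD _ hAB1) (commD _ hAB2) m1 m2 m3.
  rewrite addS_mx' => ->; rewrite IH.
  exact: rearr1.
move=> _ m1 m2 m3; rewrite xmul1_sum xmul2_sum xmul3_sum; apply: solve3.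
elim: n {hn} => [|n IH].
  by rewrite !big_geq // mulr0n raddf0 subr0 !addr0.
rewrite !(big_nat_recr n) //=.
have := st (A1 - n.+1%:R%:M) (commB _ hAB1) (commB _ hAB2) m1 m2 m3.
rewrite subS_mx IH => ->.
exact: rearr1'.
Qed.
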